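(* Let $\mathcal{A}$ be a finite-dimensional $\mathbb{C}^*$-weak Hopf algebra, let $\rho:\mathcal{A}\to M_{d_\rho}(\mathbb{C})$ be a $*$-representation, and let $(v_{ij})_{1\le i,j\le d_v}$ be a corepresentation of $\mathcal{A}$ with $S(v_{ij})=v_{ji}^*$ for all $i,j$. Define operators $W:\mathbb{C}^{d_\rho}\otimes\mathbb{C}^{d_v}\to\mathbb{C}^{d_v}\otimes\mathbb{C}^{d_\rho}$, $P$ on $\mathbb{C}^{d_v}\otimes\mathbb{C}^{d_\rho}$ and $Q$ on $\mathbb{C}^{d_\rho}\otimes\mathbb{C}^{d_v}$ by $$\langle i,a|W|b,j\rangle=\rho_{ab}(v_{ij}),\qquad \langle i,a|P|j,b\rangle=\sum\epsilon(1_{(1)}v_{ij})\,\rho_{ab}(1_{(2)}),\qquad \langle a,i|Q|b,j\rangle=\sum\rho_{ab}(1_{(1)})\,\epsilon(v_{ij}1_{(2)}),$$ where $\Delta(1)=\sum1_{(1)}\otimes1_{(2)}$. Then $P$ and $Q$ are orthogonal projections ($P^2=P=P^\dagger$, $Q^2=Q=Q^\dagger$), $WW^\dagger=P$ and $W^\dagger W=Q$, and there exists a unitary $U:\mathbb{C}^{d_\rho}\otimes\mathbb{C}^{d_v}\to\mathbb{C}^{d_v}\otimes\mathbb{C}^{d_\rho}$ with $W=PU=UQ$.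
   Context: A weak bialgebra is a finite-dimensional unital associative algebra and coassociative counital coalgebra with $\Delta(xy)=\Delta(x)\Delta(y)$ and, in Sweedler notation, $\Delta^{(2)}(1)=(1\otimes\Delta(1))(\Delta(1)\otimes1)=(\Delta(1)\otimes1)(1\otimes\Delta(1))$ and $\epsilon(xyz)=\sum\epsilon(xy_{(1)})\epsilon(y_{(2)}z)=\sum\epsilon(xy_{(2)})\epsilon(y_{(1)}z)$ for all $x,y,z$. Set $\epsilon_s(x)=\sum1_{(1)}\epsilon(x1_{(2)})$ and $\epsilon_t(x)=\sum\epsilon(1_{(1)}x)1_{(2)}$. A weak Hopf algebra is a weak bialgebra with a linear map $S$ such that $\sum S(x_{(1)})x_{(2)}=\epsilon_s(x)$, $\sum x_{(1)}S(x_{(2)})=\epsilon_t(x)$, $\sum S(x_{(1)})x_{(2)}S(x_{(3)})=S(x)$. It is a $*$-weak Hopf algebra if there is an antilinear involution $*$ with $(xy)^*=y^*x^*$ and $\Delta(x^* )=\Delta(x)^*$, and a $\mathbb{C}^*$-weak Hopf algebra if additionally it has a faithful $*$-representation. A $*$-representation is a unital homomorphism with $\rho(x^* )=\rho(x)^\dagger$. A corepresentation is a matrix $(v_{ij})$ of elements of $\mathcal{A}$ with $\Delta(v_{ij})=\sum_kv_{ik}\otimes v_{kj}$ and $\epsilon(v_{ij})=\delta_{ij}$. *)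

(* Defs.v *)
From HB Require Import structures.
From mathcomp Require Import all_boot all_order all_algebra all_field.
From mathcomp Require Import complex reals.
Set Implicit Arguments. Unset Strict Implicit. Unset Printing Implicit Defensive.
Import Order.TTheory GRing.Theory Num.Theory.
Local Open Scope ring_scope.

Definition adjmx (C : numClosedFieldType) m n (M : 'M[C]_(m, n)) : 'M[C]_(n, m) :=
  (map_mx Num.conj M)^T.

Definition unitary_op (C : numClosedFieldType) m n (U : 'M[C]_(m, n)) : Prop :=
  U *m adjmx U = 1%:M /\ adjmx U *m U = 1%:M.

Section WeakHopf.
Variable C : numClosedFieldType.
Variable A : falgType C.

(* Elements of A (x) A and A (x) A (x) A are represented by finite sums of
   elementary tensors (Sweedler representatives), given as sequences.
   Two representatives denote the same tensor iff all products of linear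
   functionals agree on them (this is exactly equality in A (x) A). *)
Definition teq2 (s t : seq (A * A)) : Prop :=
  forall f g : {scalar A},
    \sum_(p <- s) f p.1 * g p.2 = \sum_(p <- t) f p.1 * g p.2.

Definition teq3 (s t : seq (A * A * A)) : Prop :=
  forall f g h : {scalar A},
    \sum_(p <- s) f p.1.1 * g p.1.2 * h p.2 =
    \sum_(p <- t) f p.1.1 * g p.1.2 * h p.2.

Variables (Delta : A -> seq (A * A)) (eps : A -> C) (S : A -> A) (star : A -> A).

Definition weak_bialgebra_axioms : Prop :=
  [/\
      (forall (a : C) (x y : A),
         teq2 (Delta (a *: x + y))
              ([seq (a *: p.1, p.2) | p <- Delta x] ++ Delta y)),
      (forall x : A,
         teq3 [seq (p.1, q.1, q.2) | p <- Delta x, q <- Delta p.2]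
              [seq (q.1, q.2, p.2) | p <- Delta x, q <- Delta p.1]),
      (forall (a : C) (x y : A), eps (a *: x + y) = a * eps x + eps y),
      (forall x : A, \sum_(p <- Delta x) eps p.1 *: p.2 = x /\
                     \sum_(p <- Delta x) eps p.2 *: p.1 = x) &
      [/\
      (forall x y : A,
         teq2 (Delta (x * y)) [seq (p.1 * q.1, p.2 * q.2) | p <- Delta x, q <- Delta y]),
      (* Delta^(2)(1) = (1 (x) Delta(1))(Delta(1) (x) 1) = (Delta(1) (x) 1)(1 (x) Delta(1)) *)
      (teq3 [seq (p.1, q.1, q.2) | p <- Delta 1, q <- Delta p.2]
            [seq (q.1, p.1 * q.2, p.2) | p <- Delta 1, q <- Delta 1] /\
       teq3 [seq (p.1, q.1, q.2) | p <- Delta 1, q <- Delta p.2]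
            [seq (q.1, q.2 * p.1, p.2) | p <- Delta 1, q <- Delta 1]) &
      (forall x y z : A,
         eps (x * y * z) = \sum_(p <- Delta y) eps (x * p.1) * eps (p.2 * z) /\
         eps (x * y * z) = \sum_(p <- Delta y) eps (x * p.2) * eps (p.1 * z))]].

Definition eps_s (x : A) : A := \sum_(p <- Delta 1) eps (x * p.2) *: p.1.
Definition eps_t (x : A) : A := \sum_(p <- Delta 1) eps (p.1 * x) *: p.2.

Definition antipode_axioms : Prop :=
  [/\ (forall (a : C) (x y : A), S (a *: x + y) = a *: S x + S y),
      (forall x : A, \sum_(p <- Delta x) S p.1 * p.2 = eps_s x),
      (forall x : A, \sum_(p <- Delta x) p.1 * S p.2 = eps_t x) &
      (forall x : A,
         \sum_(p <- Delta x) \sum_(q <- Delta p.2) S p.1 * q.1 * S q.2 = S x)].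

Definition star_axioms : Prop :=
  [/\ (forall (a : C) (x y : A), star (a *: x + y) = Num.conj a *: star x + star y),
      (forall x : A, star (star x) = x),
      (forall x y : A, star (x * y) = star y * star x) &
      (forall x : A, teq2 (Delta (star x)) [seq (star p.1, star p.2) | p <- Delta x])].

Definition star_rep (d : nat) (rho : A -> 'M[C]_d) : Prop :=
  [/\ (forall (a : C) (x y : A), rho (a *: x + y) = a *: rho x + rho y),
      rho 1 = 1%:M,
      (forall x y : A, rho (x * y) = rho x *m rho y) &
      (forall x : A, rho (star x) = adjmx (rho x))].

Definition Cstar_weak_Hopf : Prop :=
  [/\ weak_bialgebra_axioms, antipode_axioms, star_axioms &
      exists (N : nat) (rho : A -> 'M[C]_N), star_rep rho /\ injective rho].

Definition corep (dv : nat) (v : 'I_dv -> 'I_dv -> A) : Prop :=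
  forall i j : 'I_dv,
    teq2 (Delta (v i j)) [seq (v i k, v k j) | k <- enum 'I_dv] /\
    eps (v i j) = (i == j)%:R.

(* The operators W, P, Q, with C^m (x) C^n identified with C^(m*n) via
   mxvec_index (|i> (x) |a>  ~  mxvec_index i a). *)
Definition Wop dr dv (rho : A -> 'M[C]_dr) (v : 'I_dv -> 'I_dv -> A)
  : 'M[C]_(dv * dr, dr * dv) :=
  \sum_(i < dv) \sum_(a < dr) \sum_(b < dr) \sum_(j < dv)
     rho (v i j) a b *: delta_mx (mxvec_index i a) (mxvec_index b j).

Definition Pop dr dv (rho : A -> 'M[C]_dr) (v : 'I_dv -> 'I_dv -> A)
  : 'M[C]_(dv * dr) :=
  \sum_(i < dv) \sum_(a < dr) \sum_(j < dv) \sum_(b < dr)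
     (\sum_(p <- Delta 1) eps (p.1 * v i j) * rho p.2 a b)
       *: delta_mx (mxvec_index i a) (mxvec_index j b).

Definition Qop dr dv (rho : A -> 'M[C]_dr) (v : 'I_dv -> 'I_dv -> A)
  : 'M[C]_(dr * dv) :=
  \sum_(a < dr) \sum_(i < dv) \sum_(b < dr) \sum_(j < dv)
     (\sum_(p <- Delta 1) rho p.1 a b * eps (v i j * p.2))
       *: delta_mx (mxvec_index a i) (mxvec_index b j).

End WeakHopf.

(* Main.v *)
Require Import Defs.
From HB Require Import structures.
From mathcomp Require Import all_boot all_order all_algebra all_field.
From mathcomp Require Import complex reals.
From mathcomp Require Import zify.
Import Order.TTheory GRing.Theory Num.Theory.
Local Open Scope ring_scope.
Set Implicit Arguments. Unset Strict Implicit. Unset Printing Implicit Defensive.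

Section LA.
Variable C : numClosedFieldType.

Lemma adjmxM m n p (X : 'M[C]_(m, n)) (Y : 'M[C]_(n, p)) :
  adjmx (X *m Y) = adjmx Y *m adjmx X.
Proof. by rewrite /adjmx map_mxM trmx_mul. Qed.

Lemma adjmxK m n (X : 'M[C]_(m, n)) : adjmx (adjmx X) = X.
Proof. by apply/matrixP=> i j; rewrite !mxE conjCK. Qed.

Lemma adjmxD m n (X Y : 'M[C]_(m, n)) : adjmx (X + Y) = adjmx X + adjmx Y.
Proof. by apply/matrixP=> i j; rewrite !mxE rmorphD. Qed.

Lemma adjmxN m n (X : 'M[C]_(m, n)) : adjmx (- X) = - adjmx X.
Proof. by apply/matrixP=> i j; rewrite !mxE rmorphN. Qed.

Lemma adjmx1 n : adjmx (1%:M : 'M[C]_n) = 1%:M.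
Proof. by apply/matrixP=> i j; rewrite !mxE eq_sym; case: (_ == _); rewrite ?rmorph0 ?rmorph1. Qed.

Lemma proj_basis n (E : 'M[C]_n) : E *m E = E -> adjmx E = E ->
  exists B : 'M[C]_(\rank E, n), B *m adjmx B = 1%:M /\ adjmx B *m B = E.
Proof.
move=> EE aE.
have le : (\rank E <= n)%N by exact: rank_leq_col.
set B := spectral.schmidt (row_base E).
have Bu := spectral.schmidt_unitarymx (row_base E) le.
have BE : (B :=: E)%MS.
  by apply: eqmx_trans (eq_row_base E); apply: spectral.eqmx_schmidt_free; exact: row_base_free.
have BB : B *m adjmx B = 1%:M.
  by move/spectral.unitarymxP: Bu; rewrite /adjmx map_trmx.
exists B; split => //.
have [D HD] : exists D, B = D *m E by apply/submxP; rewrite BE.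
have [Y HY] : exists Y, E = Y *m B by apply/submxP; rewrite -BE.
have BE' : B *m E = B by rewrite HD -mulmxA EE.
have H1 : E *m (adjmx B *m B) = E by rewrite {1}HY -mulmxA (mulmxA B) BB mul1mx -HY.
by rewrite -{1}BE' adjmxM aE -mulmxA H1.
Qed.

Lemma rank_compl_proj n (P : 'M[C]_n) : P *m P = P -> \rank (1%:M - P)%R = (n - \rank P)%N.
Proof.
move=> PP.
have h1 : (n <= \rank (1%:M - P)%R + \rank P)%N.
  have := mxrank_add (1%:M - P) P; rewrite subrK mxrank1 //.
have h2 := mxrank_mul_min (1%:M - P) P.
rewrite mulmxBl mul1mx PP subrr mxrank0 in h2.
lia.
Qed.

Lemma partial_iso_unitary n1 n2 (W : 'M[C]_(n1, n2)) : n1 = n2 ->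
  W *m adjmx W *m W = W ->
  exists U : 'M[C]_(n1, n2), unitary_op U /\
     W = (W *m adjmx W) *m U /\ W = U *m (adjmx W *m W).
Proof.
move=> en WWW.
set P := W *m adjmx W; set Q := adjmx W *m W.
have PW : P *m W = W by [].
have WQ : W *m Q = W by rewrite /Q mulmxA.
have PP : P *m P = P by rewrite {2}/P mulmxA PW.
have QQ : Q *m Q = Q by rewrite {1}/Q -mulmxA WQ.
have aP : adjmx P = P by rewrite /P adjmxM adjmxK.
have aQ : adjmx Q = Q by rewrite /Q adjmxM adjmxK.
have rP : \rank P = \rank W.
  apply/eqP; rewrite eqn_leq mxrankM_maxl /= -{1}PW; exact: mxrankM_maxl.
have rQ : \rank Q = \rank W.
  apply/eqP; rewrite eqn_leq mxrankM_maxr /= -{1}WQ; exact: mxrankM_maxr.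
set E := 1%:M - P; set F := 1%:M - Q.
have EE : E *m E = E by rewrite /E mulmxBl mul1mx mulmxBr mulmx1 PP subrr subr0.
have FF : F *m F = F by rewrite /F mulmxBl mul1mx mulmxBr mulmx1 QQ subrr subr0.
have aE : adjmx E = E by rewrite /E adjmxD adjmxN adjmx1 aP.
have aF : adjmx F = F by rewrite /F adjmxD adjmxN adjmx1 aQ.
have rEF : \rank F = \rank E.
  rewrite /E /F !rank_compl_proj // rP rQ; lia.
have [B1 [B1a B1b]] := proj_basis EE aE.
have [B2 [B2a B2b]] := proj_basis FF aF.
move: B2 B2a B2b; rewrite rEF => B2 B2a B2b.
set V := adjmx B1 *m B2.
have B1E : B1 *m E = B1.
  by transitivity (B1 *m (adjmx B1 *m B1)); [rewrite B1b | rewrite mulmxA B1a mul1mx].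
have B2F : B2 *m F = B2.
  by transitivity (B2 *m (adjmx B2 *m B2)); [rewrite B2b | rewrite mulmxA B2a mul1mx].
have FQ : F *m Q = 0 by rewrite /F mulmxBl mul1mx QQ subrr.
have EW : E *m W = 0 by rewrite /E mulmxBl mul1mx PW subrr.
have adj0 : forall m n, adjmx (0 : 'M[C]_(m, n)) = 0.
  by move=> m n; apply/matrixP=> i j; rewrite !mxE rmorph0.
have WF : W *m F = 0 by rewrite /F mulmxBr mulmx1 WQ subrr.
have PE : P *m E = 0 by rewrite /E mulmxBr mulmx1 PP subrr.
have VVa : V *m adjmx V = E.
  by rewrite /V adjmxM adjmxK mulmxA -(mulmxA _ B2) B2a mulmx1.
have VaV : adjmx V *m V = F.
  by rewrite /V adjmxM adjmxK mulmxA -(mulmxA _ B1) B1a mulmx1.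
have WVa : W *m adjmx V = 0.
  by rewrite /V adjmxM adjmxK -B2F adjmxM aF !mulmxA WF !mul0mx.
have PV : P *m V = 0.
  by rewrite /V -B1E adjmxM aE !mulmxA PE !mul0mx.
have VQ : V *m Q = 0 by rewrite /V -B2F -!mulmxA FQ !mulmx0.
have VaW : V *m adjmx W = 0 by rewrite -[V]adjmxK -adjmxM WVa adj0.
have aVW : adjmx V *m W = 0.
  by rewrite /V adjmxM adjmxK -B1E -!mulmxA EW !mulmx0.
have aWV : adjmx W *m V = 0 by rewrite -[V]adjmxK -adjmxM aVW adj0.
exists (W + V); split; [split|split].
- by rewrite adjmxD mulmxDl !mulmxDr VVa WVa VaW -/P addr0 add0r /E addrC subrK.
- by rewrite adjmxD mulmxDl !mulmxDr VaV aWV aVW -/Q addr0 add0r /F addrC subrK.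
- by rewrite mulmxDr PV addr0 PW.
- by rewrite mulmxDl VQ addr0 WQ.
Qed.
End LA.

Section Alg.
Variable C : numClosedFieldType.
Variable A : falgType C.

Section Lin.
Variable V : lmodType C.
Variable f : A -> V.
Hypothesis Hf : forall a x y, f (a *: x + y) = a *: f x + f y.

Lemma lin0 : f 0 = 0.
Proof.
have h : f 0 = f 0 + f 0 by rewrite -{1}(addr0 (0 : A)) -{1}(scale1r (0 : A)) Hf scale1r.
by apply: (addrI (f 0)); rewrite addr0 -h.
Qed.

Lemma linD x y : f (x + y) = f x + f y.
Proof. by rewrite -{1}(scale1r x) Hf scale1r. Qed.

Lemma linZ a x : f (a *: x) = a *: f x.
Proof. by rewrite -(addr0 (a *: x)) Hf lin0 addr0. Qed.

Lemma lin_big (I : Type) (r : seq I) (P : pred I) (F : I -> A) :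
  f (\sum_(i <- r | P i) F i) = \sum_(i <- r | P i) f (F i).
Proof. exact: (big_morph f linD lin0). Qed.
End Lin.

Lemma teq2_bilin (V : lmodType C) (B : A -> A -> V) :
  (forall y a x1 x2, B (a *: x1 + x2) y = a *: B x1 y + B x2 y) ->
  (forall x a y1 y2, B x (a *: y1 + y2) = a *: B x y1 + B x y2) ->
  forall s t, teq2 s t ->
  \sum_(p <- s) B p.1 p.2 = \sum_(p <- t) B p.1 p.2.
Proof.
move=> HL HR.
set e := vbasis (fullv : {vspace A}).
have dec : forall x y, B x y = \sum_i \sum_j
   (coord e i x * coord e j y) *: B e`_i e`_j.
  move=> x y.
  rewrite {1}(coord_vbasis (memvf x)).
  rewrite (lin_big (HL y)).
  apply: eq_bigr => i _.
  rewrite (linZ (HL y)) {1}(coord_vbasis (memvf y)).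
  rewrite (lin_big (HR _)) scaler_sumr.
  apply: eq_bigr => j _.
  by rewrite (linZ (HR _)) scalerA.
move=> s t Hst.
have step : forall u, \sum_(p <- u) B p.1 p.2 = \sum_i \sum_j
   (\sum_(p <- u) coord e i p.1 * coord e j p.2) *: B e`_i e`_j.
  move=> u.
  under eq_bigr do rewrite dec.
  rewrite exchange_big /=; apply: eq_bigr => i _.
  rewrite exchange_big /=; apply: eq_bigr => j _.
  by rewrite scaler_suml.
rewrite !step; apply: eq_bigr => i _; apply: eq_bigr => j _.
by rewrite (Hst (coord e i) (coord e j)).
Qed.

Section Ids.
Variables (Delta : A -> seq (A * A)) (eps : A -> C) (S : A -> A).
Hypothesis epsL : forall (a : C) (x y : A), eps (a *: x + y) = a * eps x + eps y.
Hypothesis SL : forall (a : C) (x y : A), S (a *: x + y) = a *: S x + S y.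
Hypothesis ax1 : forall x : A, \sum_(p <- Delta x) S p.1 * p.2 = eps_s Delta eps x.
Hypothesis ax2 : forall x : A, \sum_(p <- Delta x) p.1 * S p.2 = eps_t Delta eps x.
Hypothesis ax3 : forall x : A,
         \sum_(p <- Delta x) \sum_(q <- Delta p.2) S p.1 * q.1 * S q.2 = S x.
Variables (dv : nat) (v : 'I_dv -> 'I_dv -> A).
Hypothesis Hv : corep Delta eps v.

Lemma eps_tL a x y : eps_t Delta eps (a *: x + y) = a *: eps_t Delta eps x + eps_t Delta eps y.
Proof.
rewrite /eps_t scaler_sumr -big_split /=; apply: eq_bigr => p _.
by rewrite mulrDr -scalerAr epsL scalerDl scalerA.
Qed.

Lemma sum_corep (B : A -> A -> A) i j :
  (forall y a x1 x2, B (a *: x1 + x2) y = a *: B x1 y + B x2 y) ->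
  (forall x a y1 y2, B x (a *: y1 + y2) = a *: B x y1 + B x y2) ->
  \sum_(p <- Delta (v i j)) B p.1 p.2 = \sum_k B (v i k) (v k j).
Proof.
move=> HL HR; rewrite (teq2_bilin HL HR (Hv i j).1) big_map.
by rewrite big_enum.
Qed.

Lemma id_t i j : \sum_k v i k * S (v k j) = eps_t Delta eps (v i j).
Proof.
rewrite -ax2 (sum_corep (B := fun x y => x * S y)) //.
- by move=> y a x1 x2; rewrite mulrDl scalerAl.
- by move=> x a y1 y2; rewrite SL mulrDr scalerAr.
Qed.

Lemma id_s i j : \sum_k S (v i k) * v k j = eps_s Delta eps (v i j).
Proof.
rewrite -ax1 (sum_corep (B := fun x y => S x * y)) //.
- by move=> y a x1 x2; rewrite SL mulrDl scalerAl.
- by move=> x a y1 y2; rewrite mulrDr scalerAr.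
Qed.

Lemma id_3 i j : \sum_k S (v i k) * eps_t Delta eps (v k j) = S (v i j).
Proof.
rewrite -ax3.
have -> : \sum_(p <- Delta (v i j)) \sum_(q <- Delta p.2) S p.1 * q.1 * S q.2
   = \sum_(p <- Delta (v i j)) S p.1 * eps_t Delta eps p.2.
  apply: eq_bigr => p _; rewrite -ax2 mulr_sumr; apply: eq_bigr => q _.
  by rewrite mulrA.
rewrite (sum_corep (B := fun x y => S x * eps_t Delta eps y)) //.
- by move=> y a x1 x2; rewrite SL mulrDl scalerAl.
- by move=> x a y1 y2; rewrite eps_tL mulrDr scalerAr.
Qed.
End Ids.
End Alg.

Lemma eq_idx m n (x x' : 'I_m) (y y' : 'I_n) :
  (mxvec_index x y == mxvec_index x' y') = (x == x') && (y == y').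
Proof. by rewrite /mxvec_index (inj_eq (@cast_ord_inj _ _ _)) (inj_eq enum_rank_inj) xpair_eqE. Qed.

Lemma sum_single (R : nmodType) (I : finType) (F : I -> R) x :
  (forall x', x' != x -> F x' = 0) -> \sum_x' F x' = F x.
Proof. by move=> H; rewrite (bigD1 x) //= big1 ?addr0. Qed.

Lemma sum4E (R : pzRingType) m1 m2 n1 n2
  (f : 'I_m1 -> 'I_m2 -> 'I_n1 -> 'I_n2 -> R) x y z w :
  (\sum_x' \sum_y' \sum_z' \sum_w' f x' y' z' w' *:
      delta_mx (mxvec_index x' y') (mxvec_index z' w') : 'M[R]_(m1 * m2, n1 * n2))
    (mxvec_index x y) (mxvec_index z w) = f x y z w.
Proof.
rewrite summxE (@sum_single _ _ _ x) => [|x' nx]; last first.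
  rewrite summxE big1 // => y' _; rewrite summxE big1 // => z' _.
  rewrite summxE big1 // => w' _.
  by rewrite !mxE !eq_idx (eq_sym x) (negbTE nx) /= mulr0.
rewrite summxE (@sum_single _ _ _ y) => [|y' ny]; last first.
  rewrite summxE big1 // => z' _.
  rewrite summxE big1 // => w' _.
  by rewrite !mxE !eq_idx (eq_sym y) (negbTE ny) andbF /= mulr0.
rewrite summxE (@sum_single _ _ _ z) => [|z' nz]; last first.
  rewrite summxE big1 // => w' _.
  by rewrite !mxE !eq_idx (eq_sym z) (negbTE nz) /= andbF mulr0.
rewrite summxE (@sum_single _ _ _ w) => [|w' nw]; last first.
  by rewrite !mxE !eq_idx (eq_sym w) (negbTE nw) /= !andbF mulr0.
by rewrite !mxE !eqxx /= mulr1.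
Qed.

Lemma sum_idx (R : nmodType) m n (F : 'I_(m * n) -> R) :
  \sum_k F k = \sum_x \sum_y F (mxvec_index x y).
Proof.
rewrite pair_bigA /=.
rewrite (reindex (fun p : 'I_m * 'I_n => mxvec_index p.1 p.2)) /=.
  by apply: eq_bigr => -[].
have [g h1 h2] := curry_mxvec_bij m n.
exists g => [p _ | k _].
  by case: p => a b; have := h1 (a, b) isT.
  by move: (h2 k isT); case: (g k).
Qed.

Theorem mainTheorem6 (R : realType) (A : falgType R[i])
    (Delta : A -> seq (A * A)) (eps : A -> R[i]) (S : A -> A) (star : A -> A)
    (HA : Cstar_weak_Hopf Delta eps S star)
    (dr : nat) (rho : A -> 'M[R[i]]_dr) (Hrho : star_rep star rho)
    (dv : nat) (v : 'I_dv -> 'I_dv -> A) (Hv : corep Delta eps v)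
    (HSv : forall i j : 'I_dv, S (v i j) = star (v j i)) :
  let W := Wop rho v in
  let P := Pop Delta eps rho v in
  let Q := Qop Delta eps rho v in
  [/\ (P *m P = P /\ adjmx P = P), (Q *m Q = Q /\ adjmx Q = Q),
      W *m adjmx W = P, adjmx W *m W = Q &
      exists U : 'M[R[i]]_(dv * dr, dr * dv),
        unitary_op U /\ W = P *m U /\ W = U *m Q].
Proof.
move=> W P Q.
case: HA => [[_ _ epsL _ _] [SL ax1 ax2 ax3] _ _].
case: Hrho => [rhoL rho1 rhoM rhoS].
have WE : forall i a b j, W (mxvec_index i a) (mxvec_index b j) = rho (v i j) a b.
  by move=> i a b j; rewrite /W /Wop (sum4E (fun i a b j => rho (v i j) a b)).
have PE : forall i a j b, P (mxvec_index i a) (mxvec_index j b) =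
    rho (eps_t Delta eps (v i j)) a b.
  move=> i a j b; rewrite /P /Pop
    (sum4E (fun i a j b => \sum_(p <- Delta 1) eps (p.1 * v i j) * rho p.2 a b)).
  rewrite /eps_t (lin_big rhoL) summxE; apply: eq_bigr => p _.
  by rewrite (linZ rhoL) mxE.
have QE : forall a i b j, Q (mxvec_index a i) (mxvec_index b j) =
    rho (eps_s Delta eps (v i j)) a b.
  move=> a i b j; rewrite /Q /Qop
    (sum4E (fun a i b j => \sum_(p <- Delta 1) rho p.1 a b * eps (v i j * p.2))).
  rewrite /eps_s (lin_big rhoL) summxE; apply: eq_bigr => p _.
  by rewrite (linZ rhoL) mxE mulrC.
have cj : forall x b c, Num.conj (rho x b c) = rho (star x) c b.
  by move=> x b c; rewrite rhoS !mxE.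
have rsum : forall (F : 'I_dv -> A) a b,
    \sum_k rho (F k) a b = rho (\sum_k F k) a b.
  by move=> F a b; rewrite (lin_big rhoL) summxE.
have H1 : W *m adjmx W = P.
  apply/matrixP => r c; case/mxvec_indexP: r => i a; case/mxvec_indexP: c => j b.
  rewrite !mxE sum_idx PE -(id_t SL ax2 Hv) -rsum exchange_big /=.
  apply: eq_bigr => k _; rewrite HSv rhoM mxE; apply: eq_bigr => c _.
  by rewrite !mxE !WE cj.
have H2 : adjmx W *m W = Q.
  apply/matrixP => r c; case/mxvec_indexP: r => a i; case/mxvec_indexP: c => b j.
  rewrite !mxE sum_idx QE -(id_s SL ax1 Hv) -rsum.
  apply: eq_bigr => k _; rewrite HSv rhoM mxE; apply: eq_bigr => c _.
  by rewrite !mxE !WE cj.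
have H3 : adjmx W *m P = adjmx W.
  apply/matrixP => r c; case/mxvec_indexP: r => a i; case/mxvec_indexP: c => j b.
  rewrite !mxE sum_idx WE cj -HSv -(id_3 epsL SL ax2 ax3 Hv) -rsum.
  apply: eq_bigr => k _; rewrite HSv rhoM mxE; apply: eq_bigr => c _.
  by rewrite !mxE !WE PE cj.
have aP : adjmx P = P by rewrite -H1 adjmxM adjmxK.
have aQ : adjmx Q = Q by rewrite -H2 adjmxM adjmxK.
have WWW : W *m adjmx W *m W = W.
  have h : adjmx (adjmx W *m P) = adjmx (adjmx W) by rewrite H3.
  by move: h; rewrite adjmxM !adjmxK aP H1.
have [U [HU [h1 h2]]] := partial_iso_unitary (mulnC dv dr) WWW.
rewrite H1 H2 in h1 h2.
split => //.
- by split => //; rewrite -H1 mulmxA WWW.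
- split => //; have h : adjmx W *m (W *m adjmx W *m W) = adjmx W *m W by rewrite WWW.
  by move: h; rewrite !mulmxA -H2 mulmxA.
- by exists U.
Qed.
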